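(* Over undirected graphs, the node classifier $\varphi_{\mathit{GadLin}}(x)$ is not expressible in $\mathrm{C}^2$: there is no $\mathrm{C}^2$ formula $\varphi(x)$ over the signature $\{E,P_1,P_2,P_3\}$ such that for every undirected graph $G$ of dimension 3 and every node $v$ of $G$, $G\models\varphi(v)$ iff $G$ is isomorphic to $\mathsf{gad}(G')$ for some directed graph $G'$ whose edge relation is a strict linear order.
   Context: A directed graph of dimension $d$ is $G=(V,E,\lambda)$ with $V$ finite, $E\subseteq V\times V$ without loops, $\lambda:V\to\{0,1\}^d$; it is viewed as a first-order structure with relation $E$ and unary predicates $P_i=\{v:\lambda(v)_i=1\}$. Undirected graphs are directed graphs with symmetric $E$; $\{v,w\}$ denotes the pair $(v,w),(w,v)$. $\mathrm{C}^2$ is the fragment of first-order logic with equality using only two variables $x,y$ but allowing counting quantifiers $\exists_k$ for every $k\in\mathbb{N}$ (''at least $k$ distinct elements such that''). The gadgetisation $\mathsf{gad}(G)$ of a directed graph $G=(V,E,\lambda)$ is the undirected graph $(V',E',\lambda')$ of dimension 3 such that for each edge $(u,w)\in E$: $V'$ contains $v_u^1, v_{(u,w)}^2, v_{(u,w)}^3, v_w^1$; $E'$ contains $\{v_u^1,v_{(u,w)}^2\}$, $\{v_{(u,w)}^2,v_{(u,w)}^3\}$, $\{v_{(u,w)}^3,v_w^1\}$; $\lambda'(v_u^1)=\lambda'(v_w^1)=(1,0,0)$, $\lambda'(v^2_{(u,w)})=(0,1,0)$, $\lambda'(v^3_{(u,w)})=(0,0,1)$ (no other nodes or edges). A strict linear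 order is an irreflexive, transitive, total relation. $\varphi_{\mathit{GadLin}}(x)$ accepts a node of $G$ iff $G$ is isomorphic to $\mathsf{gad}(G')$ for some strict linear order $G'$. *)

(* Defs.v *)
From mathcomp Require Import all_boot.
Set Implicit Arguments. Unset Strict Implicit. Unset Printing Implicit Defensive.

(** A (directed) graph of dimension [d]: finite vertex set, edge relation,
    labelling [V -> {0,1}^d] given as [V -> 'I_d -> bool]. *)
Record graph (d : nat) := Graph {
  gV : finType;
  gE : rel gV;
  glab : gV -> 'I_d -> bool }.
Arguments gV {d} g.
Arguments gE {d} g _ _.
Arguments glab {d} g _ _.

Definition loopfree d (G : graph d) : Prop := irreflexive (gE G).
Definition undirected d (G : graph d) : Prop :=
  loopfree G /\ symmetric (gE G).

Definition strict_linear_order d (G : graph d) : Prop :=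
  irreflexive (gE G) /\ transitive (gE G) /\
  (forall u w : gV G, u != w -> gE G u w || gE G w u).

Definition isomorphic d (G H : graph d) : Prop :=
  exists f : gV G -> gV H, bijective f /\
    (forall u v, gE H (f u) (f v) = gE G u v) /\
    (forall v i, glab H (f v) i = glab G v i).

(** Gadgetisation. Nodes: v_u^1 for every endpoint u of some edge,
    and v^2_e (tag false), v^3_e (tag true) for every edge e. *)
Section Gad.
Variables (d : nat) (G : graph d).

Definition incident (u : gV G) : bool := [exists w, gE G u w || gE G w u].
Definition gad_edge (p : gV G * gV G) : bool := gE G p.1 p.2.

Definition gadV : finType :=
  ({u : gV G | incident u} + ({p : gV G * gV G | gad_edge p} * bool))%type.

(* directed "base" edges: v_u^1 - v^2_(u,w), v^2_(u,w) - v^3_(u,w), v^3_(u,w) - v_w^1 *)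
Definition gadE0 (a b : gadV) : bool :=
  match a, b with
  | inl u, inr (e, false) => val u == (val e).1
  | inr (e, false), inr (e', true) => e == e'
  | inr (e, true), inl w => val w == (val e).2
  | _, _ => false
  end.

Definition gadE : rel gadV := fun a b => gadE0 a b || gadE0 b a.

Definition gadlab (a : gadV) (i : 'I_3) : bool :=
  match a with
  | inl _ => nat_of_ord i == 0
  | inr (_, false) => nat_of_ord i == 1
  | inr (_, true) => nat_of_ord i == 2
  end.

Definition gad : graph 3 := @Graph 3 gadV gadE gadlab.
End Gad.

(** Two-variable counting logic C^2 over signature {E, P_1, P_2, P_3}
    (P_{i+1} is [FP i], i : 'I_3). *)
Inductive var := vx | vy.
Definition var_eqb (a b : var) : bool :=
  match a, b with vx, vx | vy, vy => true | _, _ => false end.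

Inductive form :=
  | FEq (a b : var)
  | FE (a b : var)
  | FP (i : 'I_3) (a : var)
  | FNot (f : form)
  | FAnd (f g : form)
  | FOr (f g : form)
  | FExists (k : nat) (a : var) (f : form).

Definition upd (T : Type) (s : var -> T) (a : var) (w : T) : var -> T :=
  fun b => if var_eqb a b then w else s b.

Fixpoint sat (G : graph 3) (s : var -> gV G) (f : form) {struct f} : bool :=
  match f with
  | FEq a b => s a == s b
  | FE a b => gE G (s a) (s b)
  | FP i a => glab G (s a) i
  | FNot f => ~~ sat s f
  | FAnd f g => sat s f && sat s g
  | FOr f g => sat s f || sat s g
  | FExists k a f => k <= #|[pred w | sat (upd s a w) f]|
  end.
Arguments sat G s f : clear implicits.

(** Does y occur free? A formula phi(x) is one where y does not occur free. *)
Fixpoint y_free (f : form) : bool :=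
  match f with
  | FEq a b | FE a b => var_eqb a vy || var_eqb b vy
  | FP _ a => if a is vy then true else false
  | FNot f => y_free f
  | FAnd f g | FOr f g => y_free f || y_free g
  | FExists _ a f => if a is vy then false else y_free f
  end.

(* Main.v *)
Require Import Defs.
From mathcomp Require Import all_boot all_fingroup.
From mathcomp Require Import zify.
Set Implicit Arguments. Unset Strict Implicit. Unset Printing Implicit Defensive.

Lemma minn_addK a b c d K : minn a K = minn b K -> minn c K = minn d K ->
  minn (a + c) K = minn (b + d) K.
Proof. lia. Qed.

Lemma count_thresh (V1 V2 : finType) (T : finType) (c1 : V1 -> T) (c2 : V2 -> T)
  (P1 : pred V1) (P2 : pred V2) K :
  (forall t, minn #|[pred w | c1 w == t]| K = minn #|[pred w | c2 w == t]| K) ->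
  (forall w w', c1 w = c2 w' -> P1 w = P2 w') ->
  minn #|P1| K = minn #|P2| K.
Proof.
move=> Hc HP.
have E1 : #|P1| = \sum_(t : T) #|[pred w | P1 w && (c1 w == t)]|.
  rewrite -sum1_card (partition_big c1 predT) //=.
  by apply: eq_bigr => t _; rewrite sum1_card.
have E2 : #|P2| = \sum_(t : T) #|[pred w | P2 w && (c2 w == t)]|.
  rewrite -sum1_card (partition_big c2 predT) //=.
  by apply: eq_bigr => t _; rewrite sum1_card.
rewrite E1 E2.
apply: (big_ind2 (fun a b => minn a K = minn b K)) => //.
  by move=> *; apply: minn_addK.
move=> t _.
have Ht := Hc t.
case: (pickP [pred w | c1 w == t]) => [w1 /eqP Hw1|H1]; last first.
  have -> : #|[pred w | P1 w && (c1 w == t)]| = 0.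
    by apply: eq_card0 => w; rewrite !inE; move: (H1 w) => /= ->; rewrite andbF.
  have Z : #|[pred w | c1 w == t]| = 0 by apply: eq_card0 => w; rewrite !inE; move: (H1 w) => /= ->.
  rewrite Z min0n in Ht.
  have : #|[pred w | P2 w && (c2 w == t)]| <= #|[pred w | c2 w == t]|.
    by apply: subset_leq_card; apply/subsetP => w /=; rewrite !inE => /andP[].
  lia.
case: (pickP [pred w | c2 w == t]) => [w2 /eqP Hw2|H2]; last first.
  have -> : #|[pred w | P2 w && (c2 w == t)]| = 0.
    by apply: eq_card0 => w; rewrite !inE; move: (H2 w) => /= ->; rewrite andbF.
  have Z : #|[pred w | c2 w == t]| = 0 by apply: eq_card0 => w; rewrite !inE; move: (H2 w) => /= ->.
  rewrite Z min0n in Ht.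
  have : #|[pred w | P1 w && (c1 w == t)]| <= #|[pred w | c1 w == t]|.
    by apply: subset_leq_card; apply/subsetP => w /=; rewrite !inE => /andP[].
  lia.
have C1 : forall w, c1 w == t -> P1 w = P2 w2.
  by move=> w /eqP Hw; apply: (HP w w2); rewrite Hw Hw2.
have C2 : forall w, c2 w == t -> P2 w = P2 w2.
  move=> w /eqP Hw; rewrite -(HP w1 w); [apply: HP; by rewrite Hw1 Hw2 | by rewrite Hw1 Hw].
case B: (P2 w2).
- have -> : #|[pred w | P1 w && (c1 w == t)]| = #|[pred w | c1 w == t]|.
    by apply: eq_card => w; rewrite !inE; case E: (c1 w == t); rewrite ?andbF ?andbT // C1 ?B.
  have -> : #|[pred w | P2 w && (c2 w == t)]| = #|[pred w | c2 w == t]|.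
    by apply: eq_card => w; rewrite !inE; case E: (c2 w == t); rewrite ?andbF ?andbT // C2 ?B.
  exact Ht.
- have -> : #|[pred w | P1 w && (c1 w == t)]| = 0.
    by apply: eq_card0 => w; rewrite !inE; case E: (c1 w == t); rewrite ?andbF ?andbT // C1 ?B.
  have -> : #|[pred w | P2 w && (c2 w == t)]| = 0.
    by apply: eq_card0 => w; rewrite !inE; case E: (c2 w == t); rewrite ?andbF ?andbT // C2 ?B.
  by [].
Qed.

Fixpoint depth (f : form) : nat :=
  match f with
  | FNot f => depth f
  | FAnd f g | FOr f g => maxn (depth f) (depth g)
  | FExists _ _ f => (depth f).+1
  | _ => 0
  end.

Fixpoint maxk (f : form) : nat :=
  match f with
  | FNot f => maxk f
  | FAnd f g | FOr f g => maxn (maxk f) (maxk g)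
  | FExists k _ f => maxn k (maxk f)
  | _ => 0
  end.

Definition Atom (G H : graph 3) (s : var -> gV G) (s' : var -> gV H) : Prop :=
  forall a b, (s a == s b) = (s' a == s' b) /\
    gE G (s a) (s b) = gE H (s' a) (s' b) /\
    forall i, glab G (s a) i = glab H (s' a) i.

Fixpoint Wg (G H : graph 3) (K r : nat) (s : var -> gV G) (s' : var -> gV H) : Prop :=
  Atom s s' /\
  match r with
  | 0 => True
  | r'.+1 => forall a, exists (T : finType) (c1 : gV G -> T) (c2 : gV H -> T),
      (forall t, minn #|[pred w | c1 w == t]| K = minn #|[pred w | c2 w == t]| K) /\
      (forall w w', c1 w = c2 w' -> Wg K r' (upd s a w) (upd s' a w'))
  end.

Lemma Wg_atom (G H : graph 3) K r s s' : @Wg G H K r s s' -> Atom s s'.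
Proof. by case: r => [|r] []. Qed.

Lemma Wg_sound (G H : graph 3) K f : forall r s s', Wg K r s s' -> depth f <= r ->
  maxk f <= K -> sat G s f = sat H s' f.
Proof.
elim: f => [a b|a b|i a|f IH|f IHf g IHg|f IHf g IHg|k a f IH] r s s' HW Hd Hk /=.
- by case: (Wg_atom HW a b).
- by case: (Wg_atom HW a b) => _ [].
- by case: (Wg_atom HW a a) => _ [_].
- by rewrite (IH r s s').
- move: Hd Hk; rewrite /= !geq_max => /andP[Hd1 Hd2] /andP[Hk1 Hk2].
  by rewrite (IHf r s s') ?(IHg r s s').
- move: Hd Hk; rewrite /= !geq_max => /andP[Hd1 Hd2] /andP[Hk1 Hk2].
  by rewrite (IHf r s s') ?(IHg r s s').
- move: Hk; rewrite /= !geq_max => /andP[Hk1 Hk2].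
  case: r HW Hd => [|r] [_ HW] Hd //.
  have [T [c1 [c2 [Hc Hw]]]] := HW a.
  have M : minn #|[pred w | sat G (upd s a w) f]| K =
           minn #|[pred w | sat H (upd s' a w) f]| K.
    apply: (count_thresh Hc) => w w' E.
    by apply: (IH r) => //; apply: Hw.
  apply/idP/idP => /= Hk'; lia.
Qed.

Section GadFacts.
Variables (d : nat) (G : graph d).

Definition tg (w : gadV G) : nat :=
  match w with inl _ => 0 | inr (_, b) => if b then 2 else 1 end.
Definition c1 (w : gadV G) : gV G :=
  match w with inl u => val u | inr (e, _) => (val e).1 end.
Definition c2 (w : gadV G) : gV G :=
  match w with inl u => val u | inr (e, _) => (val e).2 end.

Lemma sig_pair_eq (e e' : {p : gV G * gV G | gad_edge p}) :
  (e == e') = ((val e).1 == (val e').1) && ((val e).2 == (val e').2).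
Proof.
case: e => [[a b] Hab]; case: e' => [[a' b'] Hab'] /=.
by rewrite -val_eqE /= xpair_eqE.
Qed.

Lemma gadE0_char (w w' : gadV G) : gadE0 w w' =
  [|| (tg w == 0) && (tg w' == 1) && (c1 w == c1 w'),
      (tg w == 1) && (tg w' == 2) && (c1 w == c1 w') && (c2 w == c2 w') |
      (tg w == 2) && (tg w' == 0) && (c2 w == c1 w')].
Proof.
case: w => [u|[e [|]]]; case: w' => [u'|[e' [|]]] //=;
  rewrite ?orbF ?andbT ?sig_pair_eq //; by rewrite eq_sym.
Qed.

Lemma gadE_char (w w' : gadV G) : gadE w w' = gadE0 w w' || gadE0 w' w.
Proof. by []. Qed.

Lemma eq_char (w w' : gadV G) :
  (w == w') = [&& tg w == tg w', c1 w == c1 w' & c2 w == c2 w'].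
Proof.
case: w => [u|[e [|]]]; case: w' => [u'|[e' [|]]] //=.
- rewrite andbb. apply/eqP/eqP => [[->]//|H]. by congr inl; apply: val_inj.
- apply/eqP/andP => [[->]|[H1 H2]]; first by rewrite !eqxx.
  by congr (inr (_, _)); apply/eqP; rewrite sig_pair_eq H1 H2.
- by apply/eqP; case.
- by apply/eqP; case.
- apply/eqP/andP => [[->]|[H1 H2]]; first by rewrite !eqxx.
  by congr (inr (_, _)); apply/eqP; rewrite sig_pair_eq H1 H2.
Qed.

Lemma gad_ext (w w' : gadV G) : tg w = tg w' -> c1 w = c1 w' -> c2 w = c2 w' -> w = w'.
Proof. by move=> H1 H2 H3; apply/eqP; rewrite eq_char H1 H2 H3 !eqxx. Qed.

Lemma lab_char (w : gadV G) i : gadlab w i = (nat_of_ord i == tg w).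
Proof. by case: w => [u|[e [|]]]. Qed.

Lemma tg_lt3 (w : gadV G) : tg w < 3.
Proof. by case: w => [u|[e [|]]]. Qed.

Lemma tg0_c (w : gadV G) : tg w = 0 -> c1 w = c2 w.
Proof. by case: w => [u|[e [|]]]. Qed.

Lemma tg_edge (w : gadV G) : tg w != 0 -> gE G (c1 w) (c2 w).
Proof. by case: w => [u|[e [|]]] //= _; case: e. Qed.

Lemma c12_eq (w : gadV G) : irreflexive (gE G) -> (c1 w == c2 w) = (tg w == 0).
Proof.
move=> Hirr; case: (eqVneq (tg w) 0) => [/tg0_c ->|/tg_edge]; first by rewrite eqxx.
by case: eqP => // ->; rewrite Hirr.
Qed.

Lemma gad_undirected : undirected (gad G).
Proof.
split.
- move=> w /=; rewrite /gadE orbb gadE0_char.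
  by case: (tg w) => [|[|[|]]].
- by move=> w w'; rewrite /= /gadE orbC.
Qed.

Lemma gad_path (a b c e : gadV G) :
  tg a = 0 -> tg b = 1 -> tg c = 2 -> tg e = 0 ->
  gadE a b -> gadE b c -> gadE c e -> gE G (c1 a) (c1 e).
Proof.
move=> Ta Tb Tc Te.
rewrite /gadE !gadE0_char Ta Tb Tc Te /= !orbF.
move=> /eqP H1 /andP[/eqP H2 /eqP H3] /eqP H4.
have := @tg_edge c; rewrite Tc => /(_ isT).
by rewrite -H2 -H1 H4.
Qed.

End GadFacts.

Section Comb.
Variables (n m K q : nat).

Definition Lr : rel 'I_n := fun i j => i < j.
Definition Dr : rel 'I_n := fun i j =>
  if (i == m :> nat) && (j == m.+2 :> nat) then false
  else if (i == m.+2 :> nat) && (j == m :> nat) then true else i < j.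

Definition R r := r * K.+3.
Definition Mid r (j : nat) := (R r <= j) && (j + R r < n).
Definition prof r (j : nat) := if Mid r j then n else j.
Definition phi r (U1 U2 j : nat) : nat :=
  if j == U1 then 0 else if j == U2 then 1 else if Mid r j then 2 else j.+3.

Hypothesis Hm : R q <= m.
Hypothesis Hm2 : m.+2 + R q < n.

Lemma RS r : R r.+1 = R r + K.+3.
Proof. by rewrite /R mulSn addnC. Qed.

Lemma R_mono r r' : r <= r' -> R r <= R r'.
Proof. by move=> H; rewrite /R leq_mul2r H orbT. Qed.

Lemma Mid_mono r j : Mid r.+1 j -> Mid r j.
Proof. rewrite /Mid RS; lia. Qed.

Lemma Mid_m r : r <= q -> Mid r m && Mid r m.+2.
Proof. move=> /R_mono; rewrite /Mid; lia. Qed.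

Lemma prof_cases r (j j' : 'I_n) : prof r j = prof r j' ->
  (j = j') \/ (Mid r j && Mid r j').
Proof.
rewrite /prof; case: ifP => H1; case: ifP => H2.
- by move=> _; right; apply/andP; split.
- by move=> E; have := ltn_ord j'; lia.
- by move=> E; have := ltn_ord j; lia.
- by move=> /val_inj; left.
Qed.

Lemma prof_down r (j j' : 'I_n) : prof r.+1 j = prof r.+1 j' -> prof r j = prof r j'.
Proof.
case/prof_cases => [->//|/andP[/Mid_mono H1 /Mid_mono H2]].
by rewrite /prof H1 H2.
Qed.

Lemma Dr_E i j : Dr i j = ((i < j) && ~~((i == m :> nat) && (j == m.+2 :> nat))) ||
  ((i == m.+2 :> nat) && (j == m :> nat)).
Proof. rewrite /Dr. case: ifP => H1; [|case: ifP => H2]; lia. Qed.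

Lemma Dr_irr : irreflexive Dr.
Proof. move=> i; rewrite Dr_E; lia. Qed.

Lemma Lr_irr : irreflexive Lr.
Proof. move=> i; rewrite /Lr; lia. Qed.

Lemma Dr_asym i j : Dr i j -> ~~ Dr j i.
Proof. rewrite !Dr_E; lia. Qed.

Lemma Lr_asym i j : Lr i j -> ~~ Lr j i.
Proof. rewrite /Lr; lia. Qed.

Lemma Dr_tour (i j : 'I_n) : i != j -> Dr i j || Dr j i.
Proof. rewrite !Dr_E -val_eqE /=; lia. Qed.

Lemma Lr_tour (i j : 'I_n) : i != j -> Lr i j || Lr j i.
Proof. rewrite /Lr -val_eqE /=; lia. Qed.

Lemma Dr_far (x y : 'I_n) : (x != m :> nat) -> (x != m.+2 :> nat) ->
  Dr x y = (x < y) /\ Dr y x = (y < x).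
Proof. rewrite !Dr_E; lia. Qed.

Lemma Dr_lt (i j : 'I_n) : i < j -> ((i != m :> nat) || (j != m.+2 :> nat)) -> Dr i j.
Proof. rewrite !Dr_E; lia. Qed.

Lemma tperm_ok (M : pred 'I_n) (x y : 'I_n) : (x = y \/ M x && M y) ->
  (forall z, M (tperm x y z) = M z) /\ (forall z, ~~ M z -> tperm x y z = z).
Proof.
case=> [<-|/andP[Mx My]].
  by split => z; case: tpermP => // ->.
split => z; case: tpermP => // ->; rewrite ?Mx ?My //.
Qed.

Lemma pU1 (U1 U2 V1 V2 v: 'I_n): tperm U1 V1 U2 = v -> (U1 == U2) = (V1 == V2) ->
  tperm v V2 (tperm U1 V1 U1) = V1.
Proof.
move=> Ev H12.
rewrite tpermL.
case: (eqVneq U1 U2) H12 => [E /esym/eqP E'|NE /esym/negbT NE'].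
  by move: Ev; rewrite -E tpermL => <-; rewrite E' tpermR.
have Hv1 : v != V1.
  apply: contra NE => /eqP E; apply/eqP; apply: (@perm_inj _ (tperm U1 V1)).
  by rewrite tpermL Ev.
have H21 : V2 != V1 by rewrite eq_sym.
exact: (tpermD Hv1 H21).
Qed.

Lemma pHv (M : pred 'I_n) (U1 U2 V1 V2 v : 'I_n) :
  (U1 = V1 \/ M U1 && M V1) -> (U2 = V2 \/ M U2 && M V2) ->
  tperm U1 V1 U2 = v -> v = V2 \/ M v && M V2.
Proof.
move=> H1 H2 Ev.
have [S1a S1b] := tperm_ok H1.
case: H2 => [E|/andP[M2 M2']].
  case: (boolP (M U2)) => HM.
    by right; rewrite -Ev S1a HM -E HM.
  by left; rewrite -Ev S1b // E.
by right; rewrite -Ev S1a M2 M2'.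
Qed.

Lemma exists_pi (M : pred 'I_n) (U1 U2 V1 V2 : 'I_n) :
  (U1 = V1 \/ M U1 && M V1) -> (U2 = V2 \/ M U2 && M V2) ->
  (U1 == U2) = (V1 == V2) ->
  exists pi : 'I_n -> 'I_n, [/\ injective pi, pi U1 = V1, pi U2 = V2,
    (forall x, M (pi x) = M x) & (forall x, ~~ M x -> pi x = x)].
Proof.
move=> H1 H2 H12.
have [v Ev] : exists v, tperm U1 V1 U2 = v by eexists.
have Hv := pHv H1 H2 Ev.
have [S1a S1b] := tperm_ok H1.
have [S2a S2b] := tperm_ok Hv.
exists (fun x => tperm v V2 (tperm U1 V1 x)); split.
- by move=> x y /perm_inj /perm_inj.
- exact: (pU1 Ev H12).
- by rewrite Ev tpermL.
- by move=> x; rewrite S2a S1a.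
- by move=> x Mx; rewrite S1b // S2b.
Qed.

Lemma card_perm_pre (pi : 'I_n -> 'I_n) (P : pred 'I_n) : injective pi ->
  #|[pred j | P (pi j)]| = #|P|.
Proof.
move=> Hpi; rewrite -[#|P|]cardsE -(card_preimset _ Hpi).
by apply: eq_card => j; rewrite !inE.
Qed.

Lemma card_perm_pre2 (pi : 'I_n -> 'I_n) (P : pred ('I_n * 'I_n)) : injective pi ->
  #|[pred p | P (pi p.1, pi p.2)]| = #|P|.
Proof.
move=> Hpi.
have Hf : injective (fun p : 'I_n * 'I_n => (pi p.1, pi p.2)).
  by move=> [a b] [c d] [/Hpi -> /Hpi ->].
rewrite -[#|P|]cardsE -(card_preimset _ Hf).
by apply: eq_card => j; rewrite !inE.
Qed.

Lemma phi2 r (U1 U2 j : nat) :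
  (phi r U1 U2 j == 2) = (j != U1) && (j != U2) && Mid r j.
Proof. rewrite /phi. case: ifP => H1; [| case: ifP => H2; [| case: ifP => H3]]; lia. Qed.

Lemma card3 (a b c : 'I_n) : #|[set a; b; c]| <= 3.
Proof. rewrite cardsU cardsU1 !cards1; lia. Qed.

Lemma card_interval (lo k : nat) (P : pred 'I_n) (z1 z2 z3 : 'I_n) :
  lo + k <= n ->
  (forall j : 'I_n, lo <= j < lo + k -> j \notin [set z1; z2; z3] -> P j) ->
  k <= #|P| + 3.
Proof.
move=> Hn HP; rewrite -cardsE; set A := [set x in P].
have HA : forall j : 'I_n, lo <= j < lo + k -> j \notin [set z1; z2; z3] -> j \in A.
  by move=> j H1 H2; rewrite inE; apply: HP.
have Hb : forall i : 'I_k, lo + i < n by move=> i; have := ltn_ord i; lia.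
pose g := fun i : 'I_k => Ordinal (Hb i).
have gi : injective g.
  move=> i i' /(congr1 val) /= H; apply: val_inj => /=; lia.
have Hs : [set g i | i in 'I_k] \subset A :|: [set z1; z2; z3].
  apply/subsetP => j /imsetP [i _ ->]; rewrite inE.
  case: (boolP (g i \in [set z1; z2; z3])) => H; first by rewrite orbT.
  by rewrite HA //= ; have := ltn_ord i; lia.
have H1 := subset_leq_card Hs; rewrite card_imset // card_ord in H1.
apply: (leq_trans H1); rewrite cardsU; apply: (leq_trans (leq_subr _ _)).
rewrite leq_add2l; exact: card3.
Qed.

Lemma n_gt_m2 : m.+2 < n. Proof. lia. Qed.
Lemma n_gt_m : m < n. Proof. lia. Qed.
Definition zm2 : 'I_n := Ordinal n_gt_m2.
Definition zm : 'I_n := Ordinal n_gt_m.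

Lemma LB_fwd (E : rel 'I_n) r (x U1 U2 : 'I_n) : r < q -> Mid r.+1 x ->
  (forall j : 'I_n, x < j -> (j != m.+2 :> nat) -> E x j) ->
  K <= #|[pred j : 'I_n | E x j && (phi r U1 U2 j == 2)]|.
Proof.
move=> Hr Hx HE.
suff : K.+3 <= #|[pred j : 'I_n | E x j && (phi r U1 U2 j == 2)]| + 3 by lia.
apply: (@card_interval x.+1 K.+3 _ U1 U2 zm2) => [|j Hj]; first by move: Hx; rewrite /Mid RS; lia.
rewrite !inE /= -!val_eqE /= => Hz; rewrite phi2 HE; move: Hx Hj Hz; rewrite /Mid RS; lia.
Qed.

Lemma LB_bwd (E : rel 'I_n) r (x U1 U2 : 'I_n) : r < q -> Mid r.+1 x ->
  (forall j : 'I_n, j < x -> (j != m :> nat) -> E j x) ->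
  K <= #|[pred j : 'I_n | E j x && (phi r U1 U2 j == 2)]|.
Proof.
move=> Hr Hx HE.
suff : K.+3 <= #|[pred j : 'I_n | E j x && (phi r U1 U2 j == 2)]| + 3 by lia.
apply: (@card_interval (x - K.+3) K.+3 _ U1 U2 zm) => [|j Hj]; first by move: Hx; rewrite /Mid RS; lia.
rewrite !inE /= -!val_eqE /= => Hz; rewrite phi2 HE; move: Hx Hj Hz; rewrite /Mid RS; lia.
Qed.

Definition NE (E : rel 'I_n) (f : 'I_n -> nat) a b :=
  #|[pred p : 'I_n * 'I_n | E p.1 p.2 && (f p.1 == a) && (f p.2 == b)]|.

Lemma fix_first (E : rel 'I_n) (f : 'I_n -> nat) a b (x : 'I_n) : f x = a ->
  #|[pred j | E x j && (f j == b)]| <= NE E f a b.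
Proof.
move=> Hx; rewrite /NE -cardsE.
have gi : injective (fun j : 'I_n => (x, j)) by move=> j j' [].
rewrite -(card_imset _ gi) -[X in _ <= X]cardsE; apply: subset_leq_card.
apply/subsetP => p /imsetP [j]; rewrite !inE /= => /andP[H1 H2] ->.
by rewrite /= H1 Hx eqxx H2.
Qed.

Lemma fix_second (E : rel 'I_n) (f : 'I_n -> nat) a b (y : 'I_n) : f y = b ->
  #|[pred j | E j y && (f j == a)]| <= NE E f a b.
Proof.
move=> Hy; rewrite /NE -cardsE.
have gi : injective (fun j : 'I_n => (j, y)) by move=> j j' [].
rewrite -(card_imset _ gi) -[X in _ <= X]cardsE; apply: subset_leq_card.
apply/subsetP => p /imsetP [j]; rewrite !inE /= => /andP[H1 H2] ->.
by rewrite /= H1 Hy eqxx H2.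
Qed.

Lemma phi_le1 r (U1 U2 j : nat) : phi r U1 U2 j <= 1 ->
  (phi r U1 U2 j == 0) && (j == U1) || (phi r U1 U2 j == 1) && (j != U1) && (j == U2).
Proof. rewrite /phi. case: ifP => H1; [| case: ifP => H2; [| case: ifP => H3]]; lia. Qed.

Lemma phi_Mid r (U1 U2 j : nat) : Mid r j -> phi r U1 U2 j <= 2.
Proof. rewrite /phi. case: ifP => H1; [| case: ifP => H2; [| case: ifP => H3]]; lia. Qed.

Lemma EC r (U1 U2 V1 V2 : 'I_n) a b : r < q ->
  prof r.+1 U1 = prof r.+1 V1 -> prof r.+1 U2 = prof r.+1 V2 ->
  (U1 == U2) = (V1 == V2) ->
  (U1 != U2 -> Lr U1 U2 && Dr V1 V2) ->
  minn (NE Lr (fun j => phi r U1 U2 j) a b) K =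
  minn (NE Dr (fun j => phi r V1 V2 j) a b) K.
Proof.
move=> Hr P1 P2 H12 Hed.
have [pi [Hinj HU1 HU2 HM HF]] :=
  @exists_pi (fun j : 'I_n => Mid r.+1 j) U1 U2 V1 V2 (prof_cases P1) (prof_cases P2) H12.
have Hphi : forall j, phi r V1 V2 (pi j) = phi r U1 U2 j.
  move=> j; rewrite /phi -HU1 -HU2 !val_eqE !(inj_eq Hinj).
  case: (boolP (Mid r.+1 j)) => Hj.
    have Hj' : Mid r.+1 (pi j) by rewrite HM.
    by rewrite (Mid_mono Hj) (Mid_mono Hj').
  by rewrite HF.
have Eq1 : NE Dr (fun j => phi r V1 V2 j) a b =
  #|[pred p : 'I_n * 'I_n | Dr (pi p.1) (pi p.2) && (phi r U1 U2 p.1 == a) && (phi r U1 U2 p.2 == b)]|.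
  rewrite /NE -(@card_perm_pre2 pi _ Hinj); apply: eq_card => p.
  by rewrite !inE /= !Hphi.
have Mm := @Mid_m r.+1 Hr.
have Agree : forall p : 'I_n * 'I_n, ~~ (Mid r.+1 p.1 && Mid r.+1 p.2) ->
    Dr (pi p.1) (pi p.2) = Lr p.1 p.2.
  case=> [p1 p2] /=; rewrite negb_and => /orP[H|H].
  - rewrite (HF _ H).
    have [-> _] : Dr p1 (pi p2) = (p1 < pi p2) /\ Dr (pi p2) p1 = (pi p2 < p1).
      by apply: Dr_far; move: H Mm; rewrite /Mid; lia.
    case: (boolP (Mid r.+1 p2)) => H2; last by rewrite HF.
    have H2' : Mid r.+1 (pi p2) by rewrite HM.
    by move: H H2 H2'; rewrite /Mid /Lr; lia.
  - rewrite (HF _ H).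
    have [_ ->] : Dr p2 (pi p1) = (p2 < pi p1) /\ Dr (pi p1) p2 = (pi p1 < p2).
      by apply: Dr_far; move: H Mm; rewrite /Mid; lia.
    case: (boolP (Mid r.+1 p1)) => H2; last by rewrite HF.
    have H2' : Mid r.+1 (pi p1) by rewrite HM.
    by move: H H2 H2'; rewrite /Mid /Lr; lia.
case: (boolP ((a <= 1) && (b <= 1))) => [/andP[Ha Hb]|Hab].
  rewrite Eq1 /NE; congr minn; apply: eq_card => [[p1 p2]]; rewrite !inE /=.
  case: (eqVneq (phi r U1 U2 p1) a) => [E1|]; last by rewrite !andbF.
  case: (eqVneq (phi r U1 U2 p2) b) => [E2|]; last by rewrite !andbF.
  rewrite !andbT.
  have X1 := @phi_le1 r U1 U2 p1; rewrite E1 in X1; have {X1} X1 := X1 Ha.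
  have X2 := @phi_le1 r U1 U2 p2; rewrite E2 in X2; have {X2} X2 := X2 Hb.
  have V12 : (V1 == V2) = (U1 == U2) by [].
  move: X1 X2; rewrite !val_eqE => /orP[/andP[_ /eqP->]|/andP[/andP[_ _] /eqP->]]
     /orP[/andP[_ /eqP->]|/andP[/andP[_ _] /eqP->]]; rewrite ?HU1 ?HU2.
  + by rewrite Lr_irr Dr_irr.
  + case: (eqVneq U1 U2) V12 => [E /eqP->|NE _]; first by rewrite E Lr_irr Dr_irr.
    by case/andP: (Hed NE) => -> ->.
  + case: (eqVneq U1 U2) V12 => [E /eqP->|NE _]; first by rewrite E Lr_irr Dr_irr.
    case/andP: (Hed NE) => /Lr_asym/negbTE-> /Dr_asym/negbTE-> //.
  + by rewrite Lr_irr Dr_irr.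
case: (boolP [exists p : 'I_n * 'I_n, (phi r U1 U2 p.1 == a) && (phi r U1 U2 p.2 == b)
   && Mid r.+1 p.1 && Mid r.+1 p.2]) => [/existsP [[p1 p2] /= /andP[/andP[/andP[Ea Eb] M1] M2]] | /existsPn Hno].
  have Ha : a <= 2 by rewrite -(eqP Ea); apply: phi_Mid; apply: Mid_mono.
  have Hb : b <= 2 by rewrite -(eqP Eb); apply: phi_Mid; apply: Mid_mono.
  have M1' : Mid r.+1 (pi p1) by rewrite HM.
  have M2' : Mid r.+1 (pi p2) by rewrite HM.
  have Ea' : phi r V1 V2 (pi p1) = a by rewrite Hphi (eqP Ea).
  have Eb' : phi r V1 V2 (pi p2) = b by rewrite Hphi (eqP Eb).
  case: (eqVneq a 2) => Ha2.
    rewrite {}Ha2 in Ea Ea' *.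
    have L1 : K <= NE Lr (fun j => phi r U1 U2 j) 2 b.
      apply: leq_trans (LB_bwd (E:=Lr) U1 U2 Hr M2 _) (fix_second _ _ (eqP Eb)).
      by move=> j Hj _.
    have L2 : K <= NE Dr (fun j => phi r V1 V2 j) 2 b.
      apply: leq_trans (LB_bwd (E:=Dr) V1 V2 Hr M2' _) (fix_second _ _ Eb').
      by move=> j Hj Hm'; apply: Dr_lt; rewrite ?Hm'.
    by rewrite (minn_idPr L1) (minn_idPr L2).
  have Hb2 : b = 2 by move: Hab Ha Hb Ha2; lia.
  rewrite {}Hb2 in Eb Eb' *.
  have L1 : K <= NE Lr (fun j => phi r U1 U2 j) a 2.
    apply: leq_trans (LB_fwd (E:=Lr) U1 U2 Hr M1 _) (fix_first _ _ (eqP Ea)).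
    by move=> j Hj _.
  have L2 : K <= NE Dr (fun j => phi r V1 V2 j) a 2.
    apply: leq_trans (LB_fwd (E:=Dr) V1 V2 Hr M1' _) (fix_first _ _ Ea').
    by move=> j Hj Hm'; apply: Dr_lt; rewrite ?Hm' ?orbT.
  by rewrite (minn_idPr L1) (minn_idPr L2).
rewrite Eq1 /NE; congr minn; apply: eq_card => p; rewrite !inE.
have := Hno p; rewrite -!andbA.
case: (phi r U1 U2 p.1 == a); rewrite ?andbF //=.
case: (phi r U1 U2 p.2 == b); rewrite ?andbF //= => H.
rewrite !andbT Agree //; move: H; rewrite /Mid; lia.
Qed.

Lemma T0 r (U1 U2 V1 V2 : 'I_n) a b : r < q ->
  prof r.+1 U1 = prof r.+1 V1 -> prof r.+1 U2 = prof r.+1 V2 ->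
  (U1 == U2) = (V1 == V2) ->
  #|[pred j : 'I_n | (phi r U1 U2 j == a) && (phi r U1 U2 j == b)]| =
  #|[pred j : 'I_n | (phi r V1 V2 j == a) && (phi r V1 V2 j == b)]|.
Proof.
move=> Hr P1 P2 H12.
have [pi [Hinj HU1 HU2 HM HF]] :=
  @exists_pi (fun j : 'I_n => Mid r.+1 j) U1 U2 V1 V2 (prof_cases P1) (prof_cases P2) H12.
have Hphi : forall j, phi r V1 V2 (pi j) = phi r U1 U2 j.
  move=> j; rewrite /phi -HU1 -HU2 !val_eqE !(inj_eq Hinj).
  case: (boolP (Mid r.+1 j)) => Hj.
    have Hj' : Mid r.+1 (pi j) by rewrite HM.
    by rewrite (Mid_mono Hj) (Mid_mono Hj').
  by rewrite HF.
symmetry; rewrite -(@card_perm_pre pi _ Hinj); apply: eq_card => j.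
by rewrite !inE /= !Hphi.
Qed.

Definition mkG (E : rel 'I_n) : graph 0 := @Graph 0 'I_n E (fun _ _ => false).

Lemma n_gt1 : 1 < n. Proof. lia. Qed.

Lemma inc_tour (E : rel 'I_n) : (forall i j : 'I_n, i != j -> E i j || E j i) ->
  forall j : 'I_n, incident (G := mkG E) j.
Proof.
move=> Ht j; apply/existsP.
have H0 : 0 < n by lia.
have H1 : 1 < n by lia.
case: (eqVneq (nat_of_ord j) 0) => Hj.
  exists (Ordinal H1); apply: Ht; rewrite -val_eqE /= Hj.
  by [].
exists (Ordinal H0); apply: Ht; rewrite -val_eqE /=; lia.
Qed.

Lemma card_in_bij (X Y : finType) (A : pred X) (B : pred Y) (h : X -> Y) :
  {in A &, injective h} -> (forall x, A x -> B (h x)) ->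
  (forall y, B y -> exists x, A x /\ h x = y) -> #|A| = #|B|.
Proof.
move=> Hi HAB HBA.
rewrite -[#|A|]cardsE -[#|B|]cardsE -(card_in_imset (f := h)); last first.
  by move=> x y; rewrite !inE; apply: Hi.
congr (#|pred_of_set _|); apply/setP => y; rewrite inE; apply/imsetP/idP.
  by case=> x; rewrite inE => /HAB Hx ->.
by move=> /HBA [x [Ax <-]]; exists x; rewrite ?inE.
Qed.

Lemma count_tag (E : rel 'I_n) (inc : forall j : 'I_n, incident (G := mkG E) j)
  (f : 'I_n -> nat) t0 a b :
  #|[pred w : gadV (mkG E) | (tg w == t0) && (f (c1 w) == a) && (f (c2 w) == b)]| =
  if t0 == 0 then #|[pred j : 'I_n | (f j == a) && (f j == b)]|
  else if t0 < 3 then NE E f a b else 0.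
Proof.
case: ifP => [/eqP->|H0].
  apply: (@card_in_bij _ _ _ _ (fun w => c1 w)).
  - move=> w w'; rewrite !inE => /andP[/andP[/eqP T1 _] _] /andP[/andP[/eqP T2 _] _] /= E12.
    apply: (@gad_ext _ (mkG E)) => //; first by rewrite T1 T2.
    by rewrite -(tg0_c T1) -(tg0_c T2).
  - move=> w /andP[/andP[/eqP T F1] F2] /=; rewrite F1 /=; by rewrite (tg0_c T).
  - move=> j /andP[F1 F2]; exists (inl (exist _ j (inc j))); split => //=.
    by rewrite F1 F2.
case: ifP => H3; last first.
  apply: eq_card0 => w; rewrite !inE; case: (eqVneq (tg w) t0) => [Et|] //=.
  by have := tg_lt3 w; rewrite Et H3.
apply: (@card_in_bij _ _ _ _ (fun w => (c1 w, c2 w))).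
- move=> w w'; rewrite !inE => /andP[/andP[/eqP T1 _] _] /andP[/andP[/eqP T2 _] _] [E1 E2].
  by apply: (@gad_ext _ (mkG E)) => //; rewrite T1 T2.
- move=> w /andP[/andP[/eqP T F1] F2] /=; rewrite F1 F2 !andbT.
  by apply: (@tg_edge _ (mkG E)); rewrite T H0.
- move=> [p1 p2] /andP[/andP[Ep F1] F2].
  exists (inr (exist (fun p => gad_edge (G := mkG E) p) (p1, p2) Ep, t0 == 2)); split => //=.
  have -> : (if t0 == 2 then 2 else 1) = t0.
    by case: (eqVneq t0 2) => [->//|N2]; move: H0 H3 N2; lia.
  by rewrite eqxx; apply/andP.
Qed.

Lemma phi_bound r (U1 U2 : nat) (j : 'I_n) : phi r U1 U2 j < n.+3.
Proof. rewrite /phi; have := ltn_ord j; case: ifP => _; [|case: ifP => _; [|case: ifP => _]]; lia. Qed.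

Definition cls r (E : rel 'I_n) (u w : gadV (mkG E)) : 'I_3 * 'I_n.+3 * 'I_n.+3 :=
  (inord (tg w), inord (phi r (c1 u) (c2 u) (c1 w)), inord (phi r (c1 u) (c2 u) (c2 w))).

Lemma cls_eq r (E : rel 'I_n) (u w : gadV (mkG E)) (t : 'I_3 * 'I_n.+3 * 'I_n.+3) :
  (cls r u w == t) = (tg w == t.1.1) && (phi r (c1 u) (c2 u) (c1 w) == t.1.2)
                       && (phi r (c1 u) (c2 u) (c2 w) == t.2).
Proof.
case: t => [[t0 ta] tb]; rewrite /cls !xpair_eqE -!val_eqE /= !inordK //;
  by [apply: tg_lt3 | apply: phi_bound].
Qed.

Definition GL := mkG Lr.
Definition GD := mkG Dr.

Lemma CC r (u : gadV GL) (u' : gadV GD) : r < q -> tg u = tg u' ->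
  prof r.+1 (c1 u) = prof r.+1 (c1 u') -> prof r.+1 (c2 u) = prof r.+1 (c2 u') ->
  (c1 u == c2 u) = (c1 u' == c2 u') ->
  forall t, minn #|[pred w | cls r u w == t]| K = minn #|[pred w | cls r u' w == t]| K.
Proof.
move=> Hr Ht P1 P2 H12 t.
have -> : #|[pred w | cls r u w == t]| =
   #|[pred w : gadV GL | (tg w == t.1.1) && (phi r (c1 u) (c2 u) (c1 w) == t.1.2)
                       && (phi r (c1 u) (c2 u) (c2 w) == t.2)]|.
  by apply: eq_card => w; rewrite !inE cls_eq.
have -> : #|[pred w | cls r u' w == t]| =
   #|[pred w : gadV GD | (tg w == t.1.1) && (phi r (c1 u') (c2 u') (c1 w) == t.1.2)
                       && (phi r (c1 u') (c2 u') (c2 w) == t.2)]|.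
  by apply: eq_card => w; rewrite !inE cls_eq.
rewrite (@count_tag Lr (inc_tour Lr_tour) (fun j => phi r (c1 u) (c2 u) j)).
rewrite (@count_tag Dr (inc_tour Dr_tour) (fun j => phi r (c1 u') (c2 u') j)).
case: ifP => _; first by rewrite (@T0 r (c1 u) (c2 u) (c1 u') (c2 u')).
case: ifP => _ //.
apply: EC => // NE.
have Tu : tg u != 0 by rewrite -(@c12_eq _ GL) // ; exact: Lr_irr.
have Tu' : tg u' != 0 by rewrite -Ht.
by apply/andP; split; [exact: (@tg_edge _ GL u Tu) | exact: (@tg_edge _ GD u' Tu')].
Qed.
Lemma phi_transfer r (U1 U2 V1 V2 j j' : nat) : j < n -> j' < n ->
  (U1 = V1 \/ Mid r.+1 U1 && Mid r.+1 V1) -> (U2 = V2 \/ Mid r.+1 U2 && Mid r.+1 V2) ->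
  (U1 == U2) = (V1 == V2) -> phi r U1 U2 j = phi r V1 V2 j' ->
  [/\ prof r j = prof r j', (j == U1) = (j' == V1) & (j == U2) = (j' == V2)].
Proof.
move=> Hj Hj'; rewrite /phi /prof /Mid RS.
do ! case: ifP; move=> *; split; lia.
Qed.

Definition cc (E : rel 'I_n) (k : bool) (w : gadV (mkG E)) : 'I_n := if k then c2 w else c1 w.

Definition Arel r (s : var -> gadV GL) (s' : var -> gadV GD) : Prop :=
  (forall a, tg (s a) = tg (s' a) /\ forall k, prof r (cc k (s a)) = prof r (cc k (s' a))) /\
  (forall a b k l, (cc k (s a) == cc l (s b)) = (cc k (s' a) == cc l (s' b))).

Lemma Arel_atom r s s' : Arel r s s' -> Atom (G := gad GL) (H := gad GD) s s'.
Proof.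
move=> [Ht Hx] a b.
have [Ta _] := Ht a; have [Tb _] := Ht b.
have C11 : (c1 (s a) == c1 (s b)) = (c1 (s' a) == c1 (s' b)) := Hx a b false false.
have C22 : (c2 (s a) == c2 (s b)) = (c2 (s' a) == c2 (s' b)) := Hx a b true true.
have C21 : (c2 (s a) == c1 (s b)) = (c2 (s' a) == c1 (s' b)) := Hx a b true false.
have D11 : (c1 (s b) == c1 (s a)) = (c1 (s' b) == c1 (s' a)) := Hx b a false false.
have D22 : (c2 (s b) == c2 (s a)) = (c2 (s' b) == c2 (s' a)) := Hx b a true true.
have D21 : (c2 (s b) == c1 (s a)) = (c2 (s' b) == c1 (s' a)) := Hx b a true false.
split; [|split].
- by rewrite (@eq_char _ GL) (@eq_char _ GD) Ta Tb C11 C22.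
- by rewrite /= /gadE !gadE0_char Ta Tb C11 C22 C21 D11 D22 D21.
- by move=> i; rewrite /= !lab_char Ta.
Qed.

Lemma prof_cases_nat r (j j' : 'I_n) : prof r j = prof r j' ->
  (nat_of_ord j = j') \/ (Mid r j && Mid r j').
Proof. by case/prof_cases => [->|]; [left|right]. Qed.

Lemma other_var a x : var_eqb a x = false -> x = (if a is vx then vy else vx).
Proof. by case: a; case: x. Qed.

Lemma Arel_Wg r : r <= q -> forall s s', Arel r s s' ->
  Wg (G := gad GL) (H := gad GD) K r s s'.
Proof.
elim: r => [|r IH] Hr s s' HA.
  by split => //; apply: Arel_atom HA.
split; first exact: Arel_atom HA.
move=> a.
pose b := if a is vx then vy else vx.
have [Ht Hx] := HA.
have [Tb Pb] := Ht b.
exists (('I_3 * 'I_n.+3 * 'I_n.+3)%type : finType).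
exists (cls r (s b)), (cls r (s' b)); split.
  by apply: CC => //; [exact: (Pb false) | exact: (Pb true) | exact: (Hx b b false true)].
move=> w w' Hc; apply: IH; first exact: ltnW.
have E0 : tg w = tg w'.
  have := congr1 (fun t => nat_of_ord t.1.1) Hc; rewrite /cls /= !inordK //; exact: tg_lt3.
have E1 : phi r (c1 (s b)) (c2 (s b)) (c1 w) = phi r (c1 (s' b)) (c2 (s' b)) (c1 w').
  have := congr1 (fun t => nat_of_ord t.1.2) Hc; rewrite /cls /= !inordK //; exact: phi_bound.
have E2 : phi r (c1 (s b)) (c2 (s b)) (c2 w) = phi r (c1 (s' b)) (c2 (s' b)) (c2 w').
  have := congr1 (fun t => nat_of_ord t.2) Hc; rewrite /cls /= !inordK //; exact: phi_bound.
have I12 : (nat_of_ord (c1 (s b)) == c2 (s b)) = (nat_of_ord (c1 (s' b)) == c2 (s' b)).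
  by rewrite !val_eqE; exact: (Hx b b false true).
have [A1 A2 A3] := phi_transfer (ltn_ord _) (ltn_ord _)
   (prof_cases_nat (Pb false)) (prof_cases_nat (Pb true)) I12 E1.
have [B1 B2 B3] := phi_transfer (ltn_ord _) (ltn_ord _)
   (prof_cases_nat (Pb false)) (prof_cases_nat (Pb true)) I12 E2.
have N : forall k l, (cc k w == cc l (s b)) = (cc k w' == cc l (s' b)).
  by case; case; rewrite /cc -!val_eqE.
have W : forall k l, (cc k w == cc l w) = (cc k w' == cc l w').
  case; case; rewrite /cc ?eqxx //.
    rewrite eq_sym (eq_sym (c2 w')).
    by rewrite (@c12_eq _ GL w Lr_irr) (@c12_eq _ GD w' Dr_irr) E0.
  by rewrite (@c12_eq _ GL w Lr_irr) (@c12_eq _ GD w' Dr_irr) E0.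
have Pw : forall k, prof r (cc k w) = prof r (cc k w') by case.
have Ob : forall x, var_eqb a x = false -> x = b by exact: other_var.
split.
  move=> x; rewrite /upd; case: ifP => Hax; first by split.
  have [Tx Px] := Ht x; split => // k; exact: prof_down.
move=> x y k l; rewrite /upd.
case: ifP => Hax; case: ifP => Hay.
- exact: W.
- by rewrite (Ob _ Hay) N.
- by rewrite (Ob _ Hax) eq_sym N eq_sym.
- exact: Hx.
Qed.

End Comb.

Lemma tg_pres d0 (G0 : graph d0) d (G' : graph d) (f' : gV (gad G0) -> gV (gad G'))
  (Hl : forall v i, glab (gad G') (f' v) i = glab (gad G0) v i) x :
  tg (f' x) = tg x.
Proof.
have Hx := tg_lt3 x.
have := Hl x (inord (tg x)); rewrite /= !lab_char inordK // eqxx.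
by move/eqP.
Qed.

Lemma path_img d0 (G0 : graph d0) d (G' : graph d) (f' : gV (gad G0) -> gV (gad G'))
  (HE : forall u v, gE (gad G') (f' u) (f' v) = gE (gad G0) u v)
  (Hl : forall v i, glab (gad G') (f' v) i = glab (gad G0) v i)
  (a b : gV G0) (Ha : incident a) (Hb : incident b) (Eab : gE G0 a b) :
  gE G' (c1 (f' (inl (exist _ a Ha)))) (c1 (f' (inl (exist _ b Hb)))).
Proof.
pose e := exist (fun p => gad_edge (G := G0) p) (a, b) Eab.
apply: (@gad_path _ _ _ (f' (inr (e, false))) (f' (inr (e, true))));
  rewrite ?(tg_pres Hl) //.
- by have /= -> := HE (inl (exist _ a Ha)) (inr (e, false)); rewrite /gadE /= eqxx.
- by have /= -> := HE (inr (e, false)) (inr (e, true)); rewrite /gadE /= eqxx.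
- by have /= -> := HE (inr (e, true)) (inl (exist _ b Hb)); rewrite /gadE /= eqxx.
Qed.

Theorem theorem6 :
  ~ exists phi : form,
      ~~ y_free phi /\
      forall (G : graph 3), undirected G ->
      forall v : gV G,
        sat G (fun _ => v) phi <->
        exists (d : nat) (G' : graph d),
          strict_linear_order G' /\ isomorphic G (gad G').
Proof.
case=> f [_ Hf].
pose K := maxk f; pose q := depth f.
pose n := 2 * R K q + 10; pose m := R K q + 1.
have Hm : R K q <= m by rewrite /m; lia.
have Hm2 : m.+2 + R K q < n by rewrite /m /n; lia.
have H0 : 0 < n by rewrite /n; lia.
pose j0 : 'I_n := Ordinal H0.
pose v1 : gadV (GL n) := inl (exist _ j0 (inc_tour Hm Hm2 (Lr_tour Hm Hm2) j0)).
pose v2 : gadV (GD n m) := inl (exist _ j0 (inc_tour Hm Hm2 (Dr_tour Hm Hm2) j0)).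
have HA : Arel K q (fun _ => v1) (fun _ => v2).
  split; first by move=> a; split => // k; case: k.
  by move=> a b k l; case: k; case: l.
have HW := Arel_Wg Hm Hm2 (leqnn q) HA.
have Hs := Wg_sound HW (leqnn q) (leqnn K).
have S1 : sat (gad (GL n)) (fun _ => v1) f.
  apply/(Hf _ (gad_undirected (GL n)) v1).
  exists 0, (GL n); split.
    split; first exact: (Lr_irr Hm Hm2).
    split; first by move=> y x z; rewrite /= /Lr; lia.
    by move=> u w; apply: (Lr_tour Hm Hm2).
  exists id; split; first by exists id.
  by split.
have S2 : sat (gad (GD n m)) (fun _ => v2) f by rewrite -Hs.
have [d [G' [[Hirr [Htr _]] [f' [_ [HE Hl]]]]]] := (Hf _ (gad_undirected (GD n m)) v2).1 S2.
have Hm0 : m < n by rewrite /n /m; lia.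
have Hm1 : m.+1 < n by rewrite /n /m; lia.
have Hm2' : m.+2 < n by rewrite /n /m; lia.
pose a0 : 'I_n := Ordinal Hm0.
pose a1 : 'I_n := Ordinal Hm1.
pose a2 : 'I_n := Ordinal Hm2'.
have inc := inc_tour Hm Hm2 (Dr_tour Hm Hm2).
have E01 : gE (GD n m) a0 a1 by rewrite /= (Dr_E Hm Hm2) /=; lia.
have E12 : gE (GD n m) a1 a2 by rewrite /= (Dr_E Hm Hm2) /=; lia.
have E20 : gE (GD n m) a2 a0 by rewrite /= (Dr_E Hm Hm2) /=; lia.
have P01 := path_img HE Hl (inc a0) (inc a1) E01.
have P12 := path_img HE Hl (inc a1) (inc a2) E12.
have P20 := path_img HE Hl (inc a2) (inc a0) E20.
have := Htr _ _ _ (Htr _ _ _ P01 P12) P20.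
by rewrite Hirr.
Qed.
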